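(* Let $\mu>0$, $u_a\in\mathbb{R}$, $\alpha_\pm\ge0$, $u_-<u_+$, with Riemann data $(\alpha_0,u_0)=(\alpha_-,u_-)$ for $x<0$, $(\alpha_+,u_+)$ for $x>0$. With $u_l(t)=u_a+(u_--u_a)e^{-\mu t}$, $u_r(t)=u_a+(u_+-u_a)e^{-\mu t}$, $X_1(t)=u_at+\frac{(u_a-u_-)(e^{-\mu t}-1)}{\mu}$, $X_2(t)=u_at+\frac{(u_a-u_+)(e^{-\mu t}-1)}{\mu}$, $\overline u(x,t)=u_a+\frac{\mu(x-u_at)}{e^{\mu t}-1}$, the function $(\alpha,u)=(\alpha_-,u_l(t))$ for $x<X_1(t)$, $(0,\overline u)$ for $X_1(t)\le x\le X_2(t)$, $(\alpha_+,u_r(t))$ for $x>X_2(t)$ is a weak solution of the Eulerian droplet model with these data (a two-contact-discontinuity containing a vacuum state).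
   Context: The Eulerian droplet model: $\partial_t\alpha+\partial_x(\alpha u)=0$, $\partial_t(\alpha u)+\partial_x(\alpha u^2)=\mu\alpha(u_a-u)$. Weak solution: for all $\psi\in\mathcal{C}_0^\infty(\mathbb{R}\times[0,\infty))$, $\int_0^\infty\int(\alpha\psi_t+\alpha u\psi_x)dx\,dt=-\int\alpha_0\psi(x,0)dx$ and $\int_0^\infty\int(\alpha u\psi_t+\alpha u^2\psi_x+\mu\alpha(u_a-u)\psi)dx\,dt=-\int\alpha_0u_0\psi(x,0)dx$. *)

(* Defs.v *)
From Stdlib Require Import Reals Lra.
Open Scope R_scope.

Definition partial_x (f g : R -> R -> R) : Prop :=
  forall x t, derivable_pt_lim (fun y => f y t) x (g x t).

Definition partial_t (f g : R -> R -> R) : Prop :=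
  forall x t, derivable_pt_lim (fun s => f x s) t (g x t).

Definition continuous2 (f : R -> R -> R) : Prop :=
  forall x t eps, 0 < eps -> exists del, 0 < del /\
    forall y s, Rabs (y - x) < del -> Rabs (s - t) < del ->
      Rabs (f y s - f x t) < eps.

Definition smooth2 (f : R -> R -> R) : Prop :=
  exists D : nat -> nat -> R -> R -> R,
    D 0%nat 0%nat = f /\
    (forall i j, partial_x (D i j) (D (S i) j)) /\
    (forall i j, partial_t (D i j) (D i (S j))) /\
    (forall i j, continuous2 (D i j)).

(* psi restricted to R x [0,oo) has compact support. *)
Definition support_bounded_by (psi : R -> R -> R) (M : R) : Prop :=
  forall x t, (M <= Rabs x \/ M <= t) -> psi x t = 0.

(* Test functions in C_0^oo(R x [0,oo)): restrictions of smooth functions on R^2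
   whose support meets R x [0,oo) in a compact set. *)
Definition test_function (psi : R -> R -> R) : Prop :=
  smooth2 psi /\ exists M, 0 < M /\ support_bounded_by psi M.

Definition has_int (f : R -> R) (a b v : R) : Prop :=
  exists pr : Riemann_integrable f a b, RiemannInt pr = v.

Definition has_iint (F : R -> R -> R) (M v : R) : Prop :=
  exists G : R -> R,
    (forall t, 0 <= t <= M -> has_int (fun x => F x t) (- M) M (G t)) /\
    has_int G 0 M v.

(* Weak solution of the Eulerian droplet model
     d_t alpha + d_x (alpha u) = 0,
     d_t (alpha u) + d_x (alpha u^2) = mu alpha (ua - u),
   with data (alpha0, u0).  Since psi vanishes outside [-M,M] x (-oo,M),
   the integrals over R x [0,oo) and R reduce to those over [-M,M] x [0,M]
   and [-M,M]. *)
Definition weak_solution (mu ua : R) (alpha u : R -> R -> R)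
  (alpha0 u0 : R -> R) : Prop :=
  forall psi psix psit : R -> R -> R,
    test_function psi -> partial_x psi psix -> partial_t psi psit ->
    forall M, 0 < M -> support_bounded_by psi M ->
      (exists I1,
         has_int (fun x => alpha0 x * psi x 0) (- M) M I1 /\
         has_iint (fun x t => alpha x t * psit x t
                              + alpha x t * u x t * psix x t) M (- I1)) /\
      (exists I2,
         has_int (fun x => alpha0 x * u0 x * psi x 0) (- M) M I2 /\
         has_iint (fun x t => alpha x t * u x t * psit x t
                              + alpha x t * (u x t) ^ 2 * psix x t
                              + mu * alpha x t * (ua - u x t) * psi x t) M (- I2)).

Definition riemann_data (vm vp : R) (x : R) : R :=
  if Rlt_dec x 0 then vm else vp.

Definition u_side (mu ua u0 t : R) : R := ua + (u0 - ua) * exp (- mu * t).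

Definition X_curve (mu ua u0 t : R) : R :=
  ua * t + (ua - u0) * (exp (- mu * t) - 1) / mu.

Definition ubar (mu ua x t : R) : R := ua + mu * (x - ua * t) / (exp (mu * t) - 1).

Definition sol_alpha (mu ua am ap um up : R) (x t : R) : R :=
  if Rlt_dec x (X_curve mu ua um t) then am
  else if Rle_dec x (X_curve mu ua up t) then 0
  else ap.

Definition sol_u (mu ua am ap um up : R) (x t : R) : R :=
  if Rlt_dec x (X_curve mu ua um t) then u_side mu ua um t
  else if Rle_dec x (X_curve mu ua up t) then ubar mu ua x t
  else u_side mu ua up t.

(* Main.v *)
Require Import Defs.
From Stdlib Require Import Reals Lra FunctionalExtensionality.
From Coquelicot Require Import Coquelicot.
Open Scope R_scope.

Lemma iR_plus (f g : R -> R) a b l1 l2 :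
  is_RInt f a b l1 -> is_RInt g a b l2 -> is_RInt (fun x => f x + g x) a b (l1 + l2).
Proof. intros H1 H2. exact (is_RInt_plus f g a b l1 l2 H1 H2). Qed.

Lemma iR_scal (f : R -> R) a b k l :
  is_RInt f a b l -> is_RInt (fun x => k * f x) a b (k * l).
Proof. intros H. exact (is_RInt_scal f a b k l H). Qed.

Lemma iR_eq (f : R -> R) a b l l' : is_RInt f a b l -> l = l' -> is_RInt f a b l'.
Proof. intros H <-; exact H. Qed.

Lemma iR_zero (f : R -> R) a b :
  (forall x, Rmin a b < x < Rmax a b -> f x = 0) -> is_RInt f a b 0.
Proof.
  intros H. apply is_RInt_ext with (fun _ => 0).
  - intros x Hx; symmetry; auto.
  - apply iR_eq with (scal (b - a) (0:R)). exact (is_RInt_const (V:=R_NormedModule) a b 0).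
    unfold scal; simpl; unfold mult; simpl; ring.
Qed.

Lemma has_int_of (f : R -> R) a b v : is_RInt f a b v -> has_int f a b v.
Proof.
  intros H. assert (E : ex_RInt f a b) by (exists v; exact H).
  exists (ex_RInt_Reals_0 f a b E). rewrite <- RInt_Reals. now apply is_RInt_unique.
Qed.

Lemma c2_x (F : R -> R -> R) t x : continuous2 F -> continuity_pt (fun y => F y t) x.
Proof.
  intros H eps Heps. destruct (H x t eps Heps) as [d [Hd Hd']].
  exists d; split; auto. intros y [_ Hy]. unfold R_dist in *.
  apply Hd'; auto. rewrite Rminus_eq_0, Rabs_R0; auto.
Qed.

Lemma c2_comp (F : R -> R -> R) (b : R -> R) t :
  continuous2 F -> continuity_pt b t -> continuity_pt (fun s => F (b s) s) t.
Proof.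
  intros H Hb eps Heps. destruct (H (b t) t eps Heps) as [d [Hd Hd']].
  destruct (Hb d Hd) as [d2 [Hd2 Hd2']].
  exists (Rmin d d2); split. apply Rmin_pos; auto.
  intros s [_ Hs]. simpl in *. unfold R_dist in *. apply Hd'.
  - destruct (Req_dec s t) as [->|Hst]. rewrite Rminus_eq_0, Rabs_R0; auto.
    apply Hd2'. split. split. exact I. auto. eapply Rlt_le_trans; [exact Hs| apply Rmin_r].
  - eapply Rlt_le_trans; [exact Hs| apply Rmin_l].
Qed.

Lemma c2_2d (F : R -> R -> R) s x : continuous2 F -> continuity_2d_pt (fun u v => F v u) s x.
Proof.
  intros H eps. destruct (H x s eps (cond_pos eps)) as [d [Hd Hd']].
  exists (mkposreal d Hd). intros u v Hu Hv. simpl in *. apply Hd'; auto.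
Qed.

Lemma cont_ctc (f : R -> R) x : continuity_pt f x -> continuous f x.
Proof. intros H; now apply continuity_pt_filterlim. Qed.

Lemma ex_RInt_c2 (F : R -> R -> R) t a b : continuous2 F -> ex_RInt (fun x => F x t) a b.
Proof. intros H. apply (ex_RInt_continuous (V:=R_CompleteNormedModule)). intros z _. apply cont_ctc, c2_x, H. Qed.

Lemma leibniz (F Ft : R -> R -> R) (a b : R -> R) (da db : R) s :
  continuous2 F -> continuous2 Ft -> partial_t F Ft ->
  is_derive a s da -> is_derive b s db ->
  is_derive (fun s => RInt (fun x => F x s) (a s) (b s)) s
    (RInt (fun x => Ft x s) (a s) (b s) - F (a s) s * da + F (b s) s * db).
Proof.
  intros HF HFt Hp Ha Hb.
  assert (DE : forall v u, Derive (fun z => F v z) u = Ft v u).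
  { intros v u. apply is_derive_unique. apply is_derive_Reals. apply Hp. }
  assert (C2 : forall x' t, continuity_2d_pt (fun u v => Derive (fun z => F v z) u) x' t).
  { intros x' t eps. destruct (c2_2d Ft x' t HFt eps) as [d Hd]. exists d.
    intros u v Hu Hv. rewrite !DE. apply Hd; auto. }
  pose proof (is_derive_RInt_param_bound_comp (fun s x => F x s) a b s da db) as L.
  simpl in L.
  eapply is_derive_ext; [intros; reflexivity|].
  replace (RInt (fun x => Ft x s) (a s) (b s) - F (a s) s * da + F (b s) s * db)
    with (RInt (fun t : R => Derive (fun u : R => F t u) s) (a s) (b s) + - F (a s) s * da + F (b s) s * db).
  2:{ rewrite (RInt_ext _ (fun x => Ft x s)). ring. intros; apply DE. }
  apply L; clear L.
  - apply filter_forall; intros; apply ex_RInt_c2; auto.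
  - exists (mkposreal 1 Rlt_0_1). apply filter_forall; intros; apply ex_RInt_c2; auto.
  - exists (mkposreal 1 Rlt_0_1). apply filter_forall; intros; apply ex_RInt_c2; auto.
  - exact Ha.
  - exact Hb.
  - exists (mkposreal 1 Rlt_0_1). apply filter_forall; intros y t _.
    exists (Ft t y). apply is_derive_Reals. apply Hp.
  - intros; apply C2.
  - exists (mkposreal 1 Rlt_0_1). intros; apply C2.
  - exists (mkposreal 1 Rlt_0_1). intros; apply C2.
  - apply c2_x; auto.
  - apply c2_x; auto.
Qed.

Lemma cpt_lin (f g : R -> R) a b t :
  continuity_pt f t -> continuity_pt g t -> continuity_pt (fun s => a * f s + b * g s) t.
Proof. intros Hf Hg. exact (continuity_pt_plus _ _ _ (continuity_pt_scal _ a _ Hf) (continuity_pt_scal _ b _ Hg)). Qed.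

Lemma cpt_mul (f g : R -> R) t :
  continuity_pt f t -> continuity_pt g t -> continuity_pt (fun s => f s * g s) t.
Proof. intros Hf Hg. exact (continuity_pt_mult _ _ _ Hf Hg). Qed.

Lemma cpt_of_derive (f : R -> R) t l : is_derive f t l -> continuity_pt f t.
Proof. intros H. apply continuity_pt_filterlim. apply (ex_derive_continuous (K:=R_AbsRing) (V:=R_NormedModule)). exists l; exact H. Qed.

Lemma iD_lin (f g : R -> R) a b t df dg :
  is_derive f t df -> is_derive g t dg -> is_derive (fun s => a * f s + b * g s) t (a * df + b * dg).
Proof. intros Hf Hg. apply is_derive_Reals. apply is_derive_Reals in Hf, Hg.
  apply derivable_pt_lim_plus; apply derivable_pt_lim_scal; auto. Qed.

Lemma iD_mul (f g : R -> R) t df dg :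
  is_derive f t df -> is_derive g t dg -> is_derive (fun s => f s * g s) t (df * g t + f t * dg).
Proof. intros Hf Hg. apply is_derive_Reals. apply is_derive_Reals in Hf, Hg.
  apply derivable_pt_lim_mult; auto. Qed.

Lemma side_cont (psi psit psitt : R -> R -> R) (a b da db : R -> R) t :
  continuous2 psi -> continuous2 psit -> continuous2 psitt -> partial_t psit psitt ->
  (forall s, is_derive a s (da s)) -> (forall s, is_derive b s (db s)) ->
  continuity_pt da t -> continuity_pt db t ->
  continuity_pt (fun s => RInt (fun x => psit x s) (a s) (b s) - psi (a s) s * da s + psi (b s) s * db s) t.
Proof.
  intros c1 c2 c3 p3 Ha Hb Cda Cdb.
  apply continuity_pt_plus; [apply continuity_pt_minus|].
  - eapply cpt_of_derive. apply (leibniz psit psitt a b (da t) (db t) t c2 c3 p3 (Ha t) (Hb t)).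
  - apply cpt_mul; auto. apply c2_comp; auto. eapply cpt_of_derive; apply Ha.
  - apply cpt_mul; auto. apply c2_comp; auto. eapply cpt_of_derive; apply Hb.
Qed.

Lemma restrict (h : R -> R) M K v : 0 < M <= K -> (forall x, M < Rabs x -> h x = 0) ->
  is_RInt h (-K) K v -> is_RInt h (-M) M v.
Proof.
  intros HMK Hz H.
  assert (E : ex_RInt h (-M) M).
  { apply (ex_RInt_Chasles_2 (V:=R_CompleteNormedModule)) with (-K). lra.
    apply (ex_RInt_Chasles_1 (V:=R_CompleteNormedModule)) with K. lra. exists v; exact H. }
  pose proof (RInt_correct (V:=R_CompleteNormedModule) _ _ _ E) as HE.
  assert (Z1 : is_RInt h (-K) (-M) 0).
  { apply iR_zero. intros x Hx. rewrite Rmin_left, Rmax_right in Hx by lra. apply Hz.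
    rewrite Rabs_left by lra. lra. }
  assert (Z2 : is_RInt h M K 0).
  { apply iR_zero. intros x Hx. rewrite Rmin_left, Rmax_right in Hx by lra. apply Hz.
    rewrite Rabs_right by lra. lra. }
  pose proof (is_RInt_Chasles _ _ _ _ _ _ Z1 HE) as H1.
  pose proof (is_RInt_Chasles _ _ _ _ _ _ H1 Z2) as H2.
  pose proof (is_RInt_unique _ _ _ _ H) as U1. pose proof (is_RInt_unique _ _ _ _ H2) as U2.
  change (RInt h (-K) K = 0 + RInt h (-M) M + 0) in U2. rewrite Rplus_0_l, Rplus_0_r in U2. rewrite U1 in U2. rewrite U2. exact HE.
Qed.

Lemma deriv_loc0 (f : R -> R) x l r : 0 < r -> (forall h, Rabs h < r -> f (x + h) = 0) ->
  derivable_pt_lim f x l -> l = 0.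
Proof.
  intros Hr Hz Hd. destruct (Req_dec l 0) as [|Hl]; auto. exfalso.
  destruct (Hd (Rabs l) (Rabs_pos_lt _ Hl)) as [d Hd'].
  set (h := Rmin d r / 2).
  pose proof (Rmin_pos d r (cond_pos d) Hr) as Hm.
  assert (Hh : 0 < h) by (unfold h; lra).
  assert (Hh2 : h < Rmin d r) by (unfold h; lra).
  assert (Hhd : h < d) by (pose proof (Rmin_l d r); lra).
  assert (Hn : h <> 0) by lra.
  assert (Ha : Rabs h < d) by (rewrite Rabs_right by lra; exact Hhd).
  specialize (Hd' h Hn Ha).
  rewrite Hz in Hd' by (rewrite Rabs_right by lra; pose proof (Rmin_r d r); lra).
  replace (f x) with (f (x + 0)) in Hd' by (f_equal; ring).
  rewrite Hz in Hd' by (rewrite Rabs_R0; lra).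
  replace ((0 - 0) / h - l) with (- l) in Hd' by (field; lra).
  rewrite Rabs_Ropp in Hd'. lra.
Qed.

Lemma dX mu ua u0 t : 0 < mu -> is_derive (X_curve mu ua u0) t (u_side mu ua u0 t).
Proof. intros Hmu. unfold X_curve, u_side. auto_derive; auto. field. lra. Qed.

Lemma dU mu ua u0 t : is_derive (u_side mu ua u0) t (mu * (ua - u_side mu ua u0 t)).
Proof. unfold u_side. auto_derive; auto. ring. Qed.

Lemma X0 mu ua u0 : X_curve mu ua u0 0 = 0.
Proof. unfold X_curve. rewrite !Rmult_0_r, exp_0. unfold Rdiv. ring. Qed.

Lemma U0 mu ua u0 : u_side mu ua u0 0 = u0.
Proof. unfold u_side. rewrite !Rmult_0_r, exp_0. ring. Qed.

Lemma exp_bd mu t : 0 < mu -> 0 <= t -> 0 < exp (- mu * t) <= 1.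
Proof. intros. split. apply exp_pos. rewrite <- exp_0. destruct (Req_dec t 0).
  subst. rewrite Rmult_0_r. lra. left. apply exp_increasing. nra. Qed.

Lemma X_bound mu ua u0 t M : 0 < mu -> 0 <= t <= M ->
  - (Rabs ua * M + Rabs (ua - u0) / mu) <= X_curve mu ua u0 t <= Rabs ua * M + Rabs (ua - u0) / mu.
Proof.
  intros Hmu Ht. pose proof (exp_bd mu t Hmu (proj1 Ht)) as He. unfold X_curve.
  set (e := exp (- mu * t)) in *.
  assert (A1 : - (Rabs ua * M) <= ua * t <= Rabs ua * M).
  { unfold Rabs; destruct (Rcase_abs ua); split; nra. }
  set (c := ua - u0).
  assert (A2 : - Rabs c <= c * (e - 1) <= Rabs c).
  { unfold Rabs; destruct (Rcase_abs c); split; nra. }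
  assert (A3 : forall y, - Rabs c <= y <= Rabs c -> - (Rabs c / mu) <= y / mu <= Rabs c / mu).
  { intros y Hy. unfold Rdiv. pose proof (Rinv_0_lt_compat mu Hmu). split; nra. }
  specialize (A3 _ A2). lra.
Qed.

Lemma X_order mu ua um up t : 0 < mu -> um < up -> 0 <= t ->
  X_curve mu ua um t <= X_curve mu ua up t.
Proof.
  intros Hmu Hu Ht. pose proof (exp_bd mu t Hmu Ht) as He. unfold X_curve.
  set (e := exp (- mu * t)) in *.
  assert (0 <= (up - um) * (1 - e) / mu).
  { unfold Rdiv. apply Rmult_le_pos. nra. left; apply Rinv_0_lt_compat; lra. }
  replace ((ua - up) * (e - 1) / mu) with ((ua - um) * (e - 1) / mu + (up - um) * (1 - e) / mu)
    by (field; lra). lra.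
Qed.

Lemma dconst (c t : R) : is_derive (fun _ => c) t 0.
Proof. apply is_derive_Reals, derivable_pt_lim_const. Qed.

Lemma chasles3 (f : R -> R) a b c d l1 l2 l3 : is_RInt f a b l1 -> is_RInt f b c l2 ->
  is_RInt f c d l3 -> is_RInt f a d (l1 + l2 + l3).
Proof. intros H1 H2 H3. exact (is_RInt_Chasles _ _ _ _ _ _ (is_RInt_Chasles _ _ _ _ _ _ H1 H2) H3). Qed.

Lemma chasles2 (f : R -> R) a b c l1 l2 : is_RInt f a b l1 -> is_RInt f b c l2 ->
  is_RInt f a c (l1 + l2).
Proof. intros H1 H2. exact (is_RInt_Chasles _ _ _ _ _ _ H1 H2). Qed.

Lemma cU mu ua u0 t : continuity_pt (fun s => mu * (ua - u_side mu ua u0 s)) t.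
Proof.
  assert (H : continuity_pt (u_side mu ua u0) t) by (eapply cpt_of_derive; apply dU).
  exact (continuity_pt_scal _ mu _ (continuity_pt_minus (fun _ => ua) _ _ (continuity_pt_const (fun _ => ua) _ (fun _ _ => eq_refl)) H)).
Qed.

Lemma ftc_t (Phi G : R -> R) a b : (forall t, is_derive Phi t (G t)) -> (forall t, continuity_pt G t) ->
  is_RInt G a b (Phi b - Phi a).
Proof.
  intros H1 H2. apply (is_RInt_derive (V:=R_CompleteNormedModule) Phi G a b).
  intros; apply H1. intros; apply cont_ctc, H2.
Qed.

Lemma iR_ext (f g : R -> R) a b l : (forall x, Rmin a b < x < Rmax a b -> f x = g x) ->
  is_RInt f a b l -> is_RInt g a b l.
Proof. apply is_RInt_ext. Qed.

Lemma ftc_x (psi psix : R -> R -> R) t a b : continuous2 psix -> partial_x psi psix ->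
  is_RInt (fun x => psix x t) a b (psi b t - psi a t).
Proof.
  intros Hc Hp. apply (is_RInt_derive (V:=R_CompleteNormedModule) (fun x => psi x t)).
  - intros x _. apply is_derive_Reals, Hp.
  - intros x _. apply cont_ctc, c2_x, Hc.
Qed.

Lemma RInt_ok (F : R -> R -> R) t a b : continuous2 F ->
  is_RInt (fun x => F x t) a b (RInt (fun x => F x t) a b).
Proof. intros H. apply (RInt_correct (V:=R_CompleteNormedModule)). apply ex_RInt_c2, H. Qed.

Ltac Rring := match goal with |- ?a = ?b => change (@eq R a b) end; ring.

Theorem mainTheorem11 (mu ua am ap um up : R)
  (Hmu : 0 < mu) (Ham : 0 <= am) (Hap : 0 <= ap) (Hu : um < up) :
  weak_solution mu ua
    (sol_alpha mu ua am ap um up) (sol_u mu ua am ap um up)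
    (riemann_data am ap) (riemann_data um up).
Proof.
  intros psi psix psit [[D [HD0 [HDx [HDt HDc]]]] _] Hpx Hpt M HM Hsupp.
  assert (Et : psit = D 0%nat 1%nat).
  { extensionality x; extensionality t. eapply uniqueness_limite. apply Hpt.
    rewrite <- HD0. apply HDt. }
  assert (Ex : psix = D 1%nat 0%nat).
  { extensionality x; extensionality t. eapply uniqueness_limite. apply Hpx.
    rewrite <- HD0. apply HDx. }
  assert (c0 : continuous2 psi) by (rewrite <- HD0; apply HDc).
  assert (ct : continuous2 psit) by (rewrite Et; apply HDc).
  assert (cx : continuous2 psix) by (rewrite Ex; apply HDc).
  assert (ctt : continuous2 (D 0%nat 2%nat)) by apply HDc.
  assert (ptt : partial_t psit (D 0%nat 2%nat)) by (rewrite Et; apply HDt).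
  assert (Z0 : forall x t, M <= Rabs x \/ M <= t -> psi x t = 0) by apply Hsupp.
  assert (Zt : forall x t, M <= Rabs x -> psit x t = 0).
  { intros x t Hx. eapply uniqueness_limite. apply Hpt.
    replace (fun s => psi x s) with (fun _ : R => 0).
    apply derivable_pt_lim_const. extensionality s. symmetry; apply Z0; auto. }
  assert (Zx : forall x t, M < Rabs x -> psix x t = 0).
  { intros x t Hx. apply (deriv_loc0 (fun y => psi y t) x _ (Rabs x - M)). lra.
    2: apply Hpx. intros h Hh. apply Z0. left.
    revert Hh Hx; unfold Rabs; destruct (Rcase_abs h), (Rcase_abs x), (Rcase_abs (x+h)); lra. }
  set (K := M + (Rabs ua * M + Rabs (ua - um) / mu) + (Rabs ua * M + Rabs (ua - up) / mu)).
  assert (Kp1 : 0 <= Rabs ua * M + Rabs (ua - um) / mu).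
  { pose proof (X_bound mu ua um 0 M Hmu ltac:(lra)). lra. }
  assert (Kp2 : 0 <= Rabs ua * M + Rabs (ua - up) / mu).
  { pose proof (X_bound mu ua up 0 M Hmu ltac:(lra)). lra. }
  assert (HK : M <= K) by (unfold K; lra).
  assert (ZK1 : forall t, psi K t = 0) by (intros; apply Z0; left; rewrite Rabs_right; lra).
  assert (ZK2 : forall t, psi (-K) t = 0) by (intros; apply Z0; left; rewrite Rabs_left; lra).
  set (X1 := X_curve mu ua um). set (X2 := X_curve mu ua up).
  set (ul := u_side mu ua um). set (ur := u_side mu ua up).
  assert (B1 : forall t, 0 <= t <= M -> -K <= X1 t).
  { intros t Ht. pose proof (X_bound mu ua um t M Hmu Ht). unfold X1, K; lra. }
  assert (B2 : forall t, 0 <= t <= M -> X2 t <= K).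
  { intros t Ht. pose proof (X_bound mu ua up t M Hmu Ht). unfold X2, K; lra. }
  assert (B12 : forall t, 0 <= t <= M -> X1 t <= X2 t).
  { intros t Ht. apply X_order; lra. }
  set (F1 := fun t => RInt (fun x => psi x t) (-K) (X1 t)).
  set (F2 := fun t => RInt (fun x => psi x t) (X2 t) K).
  set (dF1 := fun t => RInt (fun x => psit x t) (-K) (X1 t) - psi (-K) t * 0 + psi (X1 t) t * ul t).
  set (dF2 := fun t => RInt (fun x => psit x t) (X2 t) K - psi (X2 t) t * ur t + psi K t * 0).
  assert (DF1 : forall t, is_derive F1 t (dF1 t)).
  { intros t. apply (leibniz psi psit (fun _ => -K) X1 0 (ul t) t c0 ct Hpt).
    apply dconst. apply dX; auto. }
  assert (DF2 : forall t, is_derive F2 t (dF2 t)).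
  { intros t. apply (leibniz psi psit X2 (fun _ => K) (ur t) 0 t c0 ct Hpt).
    apply dX; auto. apply dconst. }
  assert (CF1 : forall t, continuity_pt dF1 t).
  { intros t. apply (side_cont psi psit (D 0%nat 2%nat) (fun _ => -K) X1 (fun _ => 0) ul t c0 ct ctt ptt).
    intros; apply dconst. intros; apply dX; auto.
    apply continuity_pt_const; intros ? ?; reflexivity.
    eapply cpt_of_derive; apply dU. }
  assert (CF2 : forall t, continuity_pt dF2 t).
  { intros t. apply (side_cont psi psit (D 0%nat 2%nat) X2 (fun _ => K) ur (fun _ => 0) t c0 ct ctt ptt).
    intros; apply dX; auto. intros; apply dconst.
    eapply cpt_of_derive; apply dU.
    apply continuity_pt_const; intros ? ?; reflexivity. }

  assert (IM : forall t, 0 <= t <= M ->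
    is_RInt (fun x => sol_alpha mu ua am ap um up x t * psit x t
       + sol_alpha mu ua am ap um up x t * sol_u mu ua am ap um up x t * psix x t) (-M) M
       (am * dF1 t + ap * dF2 t)).
  { intros t Ht. apply restrict with K. lra.
    { intros x Hx. rewrite Zt, Zx by lra. ring. }
    pose proof (B1 t Ht). pose proof (B2 t Ht). pose proof (B12 t Ht).
    eapply iR_eq. apply chasles3 with (X1 t) (X2 t).
    - apply iR_ext with (fun x => am * (psit x t + ul t * psix x t)).
      + intros x Hx. rewrite Rmin_left, Rmax_right in Hx by lra.
        unfold sol_alpha, sol_u. fold X1 X2 ul ur.
        destruct (Rlt_dec x (X1 t)) as [_|nn]; [ring|exfalso; apply nn; lra].
      + apply iR_scal, iR_plus. apply RInt_ok; auto. apply iR_scal, (ftc_x psi); auto.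
    - apply iR_zero. intros x Hx. rewrite Rmin_left, Rmax_right in Hx by lra.
      unfold sol_alpha, sol_u. fold X1 X2 ul ur.
      destruct (Rlt_dec x (X1 t)) as [|_]; [lra|]. destruct (Rle_dec x (X2 t)) as [_|nn]; [ring|exfalso; apply nn; lra].
    - apply iR_ext with (fun x => ap * (psit x t + ur t * psix x t)).
      + intros x Hx. rewrite Rmin_left, Rmax_right in Hx by lra.
        unfold sol_alpha, sol_u. fold X1 X2 ul ur.
        destruct (Rlt_dec x (X1 t)) as [|_]; [lra|]. destruct (Rle_dec x (X2 t)) as [|_]; [lra|ring].
      + apply iR_scal, iR_plus. apply RInt_ok; auto. apply iR_scal, (ftc_x psi); auto.
    - unfold dF1, dF2. rewrite ZK1, ZK2. Rring. }
  assert (IP : forall t, 0 <= t <= M ->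
    is_RInt (fun x => sol_alpha mu ua am ap um up x t * sol_u mu ua am ap um up x t * psit x t
       + sol_alpha mu ua am ap um up x t * (sol_u mu ua am ap um up x t) ^ 2 * psix x t
       + mu * sol_alpha mu ua am ap um up x t * (ua - sol_u mu ua am ap um up x t) * psi x t) (-M) M
       (am * (mu * (ua - ul t) * F1 t + ul t * dF1 t) + ap * (mu * (ua - ur t) * F2 t + ur t * dF2 t))).
  { intros t Ht. apply restrict with K. lra.
    { intros x Hx. rewrite Zt, Zx, Z0 by lra. ring. }
    pose proof (B1 t Ht). pose proof (B2 t Ht). pose proof (B12 t Ht).
    eapply iR_eq. apply chasles3 with (X1 t) (X2 t).
    - apply iR_ext with (fun x => am * (ul t * psit x t + ul t ^ 2 * psix x t + mu * (ua - ul t) * psi x t)).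
      + intros x Hx. rewrite Rmin_left, Rmax_right in Hx by lra.
        unfold sol_alpha, sol_u. fold X1 X2 ul ur.
        destruct (Rlt_dec x (X1 t)) as [_|nn]; [ring|exfalso; apply nn; lra].
      + apply iR_scal, iR_plus. apply iR_plus. apply iR_scal, RInt_ok; auto. apply iR_scal, (ftc_x psi); auto.
        apply iR_scal, RInt_ok; auto.
    - apply iR_zero. intros x Hx. rewrite Rmin_left, Rmax_right in Hx by lra.
      unfold sol_alpha, sol_u. fold X1 X2 ul ur.
      destruct (Rlt_dec x (X1 t)) as [|_]; [lra|]. destruct (Rle_dec x (X2 t)) as [_|nn]; [ring|exfalso; apply nn; lra].
    - apply iR_ext with (fun x => ap * (ur t * psit x t + ur t ^ 2 * psix x t + mu * (ua - ur t) * psi x t)).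
      + intros x Hx. rewrite Rmin_left, Rmax_right in Hx by lra.
        unfold sol_alpha, sol_u. fold X1 X2 ul ur.
        destruct (Rlt_dec x (X1 t)) as [|_]; [lra|]. destruct (Rle_dec x (X2 t)) as [|_]; [lra|ring].
      + apply iR_scal, iR_plus. apply iR_plus. apply iR_scal, RInt_ok; auto. apply iR_scal, (ftc_x psi); auto.
        apply iR_scal, RInt_ok; auto.
    - unfold dF1, dF2, F1, F2. rewrite ZK1, ZK2. Rring. }
  assert (F1M : F1 M = 0).
  { unfold F1. apply is_RInt_unique. apply iR_zero. intros; apply Z0; right; lra. }
  assert (F2M : F2 M = 0).
  { unfold F2. apply is_RInt_unique. apply iR_zero. intros; apply Z0; right; lra. }
  assert (F10 : F1 0 = RInt (fun x => psi x 0) (-K) 0) by (unfold F1, X1; rewrite X0; reflexivity).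
  assert (F20 : F2 0 = RInt (fun x => psi x 0) 0 K) by (unfold F2, X2; rewrite X0; reflexivity).
  assert (I0 : forall c d, is_RInt (fun x => riemann_data c d x * psi x 0) (-M) M
       (c * RInt (fun x => psi x 0) (-K) 0 + d * RInt (fun x => psi x 0) 0 K)).
  { intros c d. apply restrict with K. lra.
    { intros x Hx. rewrite Z0 by lra. ring. }
    apply chasles2 with 0.
    - apply iR_ext with (fun x => c * psi x 0).
      + intros x Hx. rewrite Rmin_left, Rmax_right in Hx by lra. unfold riemann_data.
        destruct (Rlt_dec x 0) as [_|nn]; [ring|exfalso; apply nn; lra].
      + apply iR_scal, RInt_ok; auto.
    - apply iR_ext with (fun x => d * psi x 0).
      + intros x Hx. rewrite Rmin_left, Rmax_right in Hx by lra. unfold riemann_data.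
        destruct (Rlt_dec x 0) as [|_]; [lra|ring].
      + apply iR_scal, RInt_ok; auto. }
  split.
  - exists (am * RInt (fun x => psi x 0) (-K) 0 + ap * RInt (fun x => psi x 0) 0 K). split.
    + apply has_int_of. apply I0.
    + exists (fun t => am * dF1 t + ap * dF2 t). split.
      * intros t Ht. apply has_int_of, IM; auto.
      * apply has_int_of. eapply iR_eq. apply ftc_t with (Phi := fun t => am * F1 t + ap * F2 t).
        intros t; apply iD_lin; auto.
        intros t; apply cpt_lin; auto.
        simpl. rewrite F1M, F2M, F10, F20. Rring.
  - exists (am * um * RInt (fun x => psi x 0) (-K) 0 + ap * up * RInt (fun x => psi x 0) 0 K). split.
    + apply has_int_of. eapply iR_ext; [|apply (I0 (am * um) (ap * up))].
      intros x _. unfold riemann_data. destruct (Rlt_dec x 0); ring.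
    + exists (fun t => am * (mu * (ua - ul t) * F1 t + ul t * dF1 t) + ap * (mu * (ua - ur t) * F2 t + ur t * dF2 t)). split.
      * intros t Ht. apply has_int_of, IP; auto.
      * apply has_int_of. eapply iR_eq. apply ftc_t with (Phi := fun t => am * (ul t * F1 t) + ap * (ur t * F2 t)).
        intros t; apply iD_lin; apply iD_mul; auto; apply dU.
        intros t; apply cpt_lin; apply continuity_pt_plus; apply cpt_mul; auto.
        apply cU. eapply cpt_of_derive; apply DF1. eapply cpt_of_derive; apply dU.
        apply cU. eapply cpt_of_derive; apply DF2. eapply cpt_of_derive; apply dU.
        simpl. rewrite F1M, F2M, F10, F20. unfold ul, ur. rewrite !U0. Rring.
Qed.
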